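(* If $f:T^2\to\mathbb R^4$ is a conformal immersion and $\alpha\in\mathrm{span}_{\mathbb H}\{1,f\}\subset H^0$ (nowhere vanishing where defined), then the Darboux transform of $f$ given by $\alpha$ is a constant map $\hat f=c$ with $c\in\mathbb H\cup\{\infty\}$. In particular, if the complex dimension of the space of global holomorphic sections is minimal, that is $\dim_{\mathbb C}H^0=4$, then every Darboux transform given by the trivial multiplier is constant.
   Context: Identify $\mathbb R^4=\mathbb H$, $S^4=\mathbb{HP}^1=\mathbb H\cup\{\infty\}$ with $x\mapsto\begin{pmatrix}x\\1\end{pmatrix}\mathbb H$ and $\infty=\begin{pmatrix}1\\0\end{pmatrix}\mathbb H$. Let $T^2=\mathbb C/\Gamma$ and view $f$ as a $\Gamma$-periodic map on $\mathbb C$ with left normal $N$ ($*df=N\,df$). A map $\alpha:\mathbb C\to\mathbb H$ is holomorphic if $*d\alpha=N\,d\alpha$; $H^0$ denotes the space of $\Gamma$-periodic holomorphic maps (trivial multiplier), a right quaternionic (hence complex) vector space; $1,f\in H^0$. Darboux transform given by a holomorphic section with multiplier $\alpha$: define $\hat T$ by $d\alpha=-df\,\hat T\alpha$, $\nu=\hat T\alpha$, and set $\hat f=\begin{pmatrix}f\nu+\alpha\\ \nu\end{pmatrix}\mathbb H\in\mathbb{HP}^1$ (equal to $f+\hat T^{-1}$ where $\hat T\ne0$; if $\alpha$ is constant then $\hat T=0$ and $\hat f=\infty$). *)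

(* Defs.v *)
From Stdlib Require Import Reals.
From Coquelicot Require Import Coquelicot.
Open Scope R_scope.

(** * Quaternions H = R^4, basis 1, i, j, k *)
Record quat := Q { q0 : R; q1 : R; q2 : R; q3 : R }.

Definition qzero : quat := Q 0 0 0 0.
Definition qone : quat := Q 1 0 0 0.
Definition qadd (a b : quat) : quat :=
  Q (q0 a + q0 b) (q1 a + q1 b) (q2 a + q2 b) (q3 a + q3 b).
Definition qopp (a : quat) : quat := Q (- q0 a) (- q1 a) (- q2 a) (- q3 a).
Definition qmul (a b : quat) : quat :=
  Q (q0 a * q0 b - q1 a * q1 b - q2 a * q2 b - q3 a * q3 b)
    (q0 a * q1 b + q1 a * q0 b + q2 a * q3 b - q3 a * q2 b)
    (q0 a * q2 b - q1 a * q3 b + q2 a * q0 b + q3 a * q1 b)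
    (q0 a * q3 b + q1 a * q2 b - q2 a * q1 b + q3 a * q0 b).
Definition qreal (r : R) : quat := Q r 0 0 0.
Definition qcplx (a b : R) : quat := Q a b 0 0.

(** * Maps C = R^2 -> H, written as functions of (x, y), z = x + i y *)
Definition qmap := R -> R -> quat.

Definition Dx (g : qmap) : qmap := fun x y =>
  Q (Derive (fun s => q0 (g s y)) x) (Derive (fun s => q1 (g s y)) x)
    (Derive (fun s => q2 (g s y)) x) (Derive (fun s => q3 (g s y)) x).
Definition Dy (g : qmap) : qmap := fun x y =>
  Q (Derive (fun t => q0 (g x t)) y) (Derive (fun t => q1 (g x t)) y)
    (Derive (fun t => q2 (g x t)) y) (Derive (fun t => q3 (g x t)) y).

Definition has_partials (g : qmap) : Prop :=
  forall x y,
    ex_derive (fun s => q0 (g s y)) x /\ ex_derive (fun s => q1 (g s y)) x /\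
    ex_derive (fun s => q2 (g s y)) x /\ ex_derive (fun s => q3 (g s y)) x /\
    ex_derive (fun t => q0 (g x t)) y /\ ex_derive (fun t => q1 (g x t)) y /\
    ex_derive (fun t => q2 (g x t)) y /\ ex_derive (fun t => q3 (g x t)) y.

Definition qcont (g : qmap) : Prop :=
  forall x y,
    continuous (fun p : R * R => q0 (g (fst p) (snd p))) (x, y) /\
    continuous (fun p : R * R => q1 (g (fst p) (snd p))) (x, y) /\
    continuous (fun p : R * R => q2 (g (fst p) (snd p))) (x, y) /\
    continuous (fun p : R * R => q3 (g (fst p) (snd p))) (x, y).

(** C^infinity: g lies in a class of continuous maps with partial derivatives
    which is closed under taking partial derivatives *)
Definition smooth (g : qmap) : Prop :=
  exists P : qmap -> Prop, P g /\
    forall h, P h -> qcont h /\ has_partials h /\ P (Dx h) /\ P (Dy h).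

(** * The torus T^2 = C / Gamma, Gamma spanned by w1 = (w1x,w1y), w2 = (w2x,w2y) *)
Definition lattice_nondeg (w1x w1y w2x w2y : R) : Prop :=
  w1x * w2y - w1y * w2x <> 0.
Definition periodic (w1x w1y w2x w2y : R) (g : qmap) : Prop :=
  forall x y, g (x + w1x) (y + w1y) = g x y /\ g (x + w2x) (y + w2y) = g x y.

(** Hodge star on 1-forms: ( *dg)(d/dx) = dg(d/dy), ( *dg)(d/dy) = - dg(d/dx).
    "*dg = N dg" evaluated on d/dx and d/dy. *)
Definition star_eq_left (N g : qmap) : Prop :=
  forall x y, Dy g x y = qmul (N x y) (Dx g x y) /\
              qopp (Dx g x y) = qmul (N x y) (Dy g x y).

Definition conformal_immersion (f N : qmap) : Prop :=
  smooth f /\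
  (forall x y (a b : R),
      qadd (qmul (qreal a) (Dx f x y)) (qmul (qreal b) (Dy f x y)) = qzero ->
      a = 0 /\ b = 0) /\
  star_eq_left N f.

Definition holomorphic (N alpha : qmap) : Prop :=
  smooth alpha /\ star_eq_left N alpha.

(** H^0: Gamma-periodic holomorphic maps (trivial multiplier) *)
Definition inH0 (w1x w1y w2x w2y : R) (N alpha : qmap) : Prop :=
  holomorphic N alpha /\ periodic w1x w1y w2x w2y alpha.

Definition in_span_1_f (f alpha : qmap) : Prop :=
  exists a b : quat, forall x y, alpha x y = qadd a (qmul (f x y) b).

Definition darboux_T (f alpha T : qmap) : Prop :=
  forall x y,
    Dx alpha x y = qopp (qmul (Dx f x y) (qmul (T x y) (alpha x y))) /\
    Dy alpha x y = qopp (qmul (Dy f x y) (qmul (T x y) (alpha x y))).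

(** Points of HP^1: nonzero vectors (u1,u2) in H^2 modulo right multiplication
    by nonzero quaternions.  (u1,u2) represents the point (u1,u2)H. *)
Definition same_point (u1 u2 v1 v2 : quat) : Prop :=
  exists l : quat, l <> qzero /\ u1 = qmul v1 l /\ u2 = qmul v2 l.

(** The Darboux transform fhat = (f nu + alpha, nu) H with nu = T alpha is a
    constant map into HP^1 = H u {oo}. *)
Definition darboux_constant (f alpha T : qmap) : Prop :=
  exists c1 c2 : quat, (c1 <> qzero \/ c2 <> qzero) /\
    forall x y,
      let nu := qmul (T x y) (alpha x y) in
      same_point (qadd (qmul (f x y) nu) (alpha x y)) nu c1 c2.

(** complex structure on H^0: right multiplication by C = R + R i in H.
    dim_C H^0 = 4. *)
Definition lincomb4 (e1 e2 e3 e4 : qmap) (c1 c2 c3 c4 : quat) : qmap :=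
  fun x y => qadd (qadd (qmul (e1 x y) c1) (qmul (e2 x y) c2))
                  (qadd (qmul (e3 x y) c3) (qmul (e4 x y) c4)).

Definition dimC_H0_eq4 (w1x w1y w2x w2y : R) (N : qmap) : Prop :=
  exists e1 e2 e3 e4 : qmap,
    inH0 w1x w1y w2x w2y N e1 /\ inH0 w1x w1y w2x w2y N e2 /\
    inH0 w1x w1y w2x w2y N e3 /\ inH0 w1x w1y w2x w2y N e4 /\
    (forall a1 b1 a2 b2 a3 b3 a4 b4 : R,
       (forall x y, lincomb4 e1 e2 e3 e4 (qcplx a1 b1) (qcplx a2 b2)
                      (qcplx a3 b3) (qcplx a4 b4) x y = qzero) ->
       a1 = 0 /\ b1 = 0 /\ a2 = 0 /\ b2 = 0 /\ a3 = 0 /\ b3 = 0 /\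
       a4 = 0 /\ b4 = 0) /\
    (forall alpha, inH0 w1x w1y w2x w2y N alpha ->
       exists a1 b1 a2 b2 a3 b3 a4 b4 : R,
         alpha = lincomb4 e1 e2 e3 e4 (qcplx a1 b1) (qcplx a2 b2)
                   (qcplx a3 b3) (qcplx a4 b4)).

(* Main.v *)
Require Import Defs.
From Stdlib Require Import Reals Lra Lia Classical FunctionalExtensionality.
From Coquelicot Require Import Coquelicot.
Open Scope R_scope.
Require Import Defs.

Lemma L4 (u0 u1 u2 u3 : R -> R) c k0 k1 k2 k3 x :
  ex_derive u0 x -> ex_derive u1 x -> ex_derive u2 x -> ex_derive u3 x ->
  Derive (fun s => c + (u0 s * k0 + u1 s * k1 + u2 s * k2 + u3 s * k3)) x
  = Derive u0 x * k0 + Derive u1 x * k1 + Derive u2 x * k2 + Derive u3 x * k3.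
Proof.
  intros H0 H1 H2 H3. apply is_derive_unique. auto_derive. repeat split; auto.
  change (fun x0 => u0 x0) with u0; change (fun x0 => u1 x0) with u1;
  change (fun x0 => u2 x0) with u2; change (fun x0 => u3 x0) with u3. ring.
Qed.

Lemma Dx_affine (g : qmap) (a b : quat) (x y : R) : has_partials g ->
  Dx (fun (s t : R) => qadd a (qmul (g s t) b)) x y = qmul (Dx g x y) b.
Proof.
  intros Hg. destruct (Hg x y) as [H0 [H1 [H2 [H3 _]]]].
  unfold Dx, qadd, qmul; simpl. f_equal.
  - rewrite (Derive_ext _ (fun s => q0 a + (q0 (g s y) * q0 b + q1 (g s y) * (- q1 b) + q2 (g s y) * (- q2 b) + q3 (g s y) * (- q3 b)))) by (intros; ring).
    rewrite L4 by auto. ring.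
  - rewrite (Derive_ext _ (fun s => q1 a + (q0 (g s y) * q1 b + q1 (g s y) * q0 b + q2 (g s y) * q3 b + q3 (g s y) * (- q2 b)))) by (intros; ring).
    rewrite L4 by auto. ring.
  - rewrite (Derive_ext _ (fun s => q2 a + (q0 (g s y) * q2 b + q1 (g s y) * (- q3 b) + q2 (g s y) * q0 b + q3 (g s y) * q1 b))) by (intros; ring).
    rewrite L4 by auto. ring.
  - rewrite (Derive_ext _ (fun s => q3 a + (q0 (g s y) * q3 b + q1 (g s y) * q2 b + q2 (g s y) * (- q1 b) + q3 (g s y) * q0 b))) by (intros; ring).
    rewrite L4 by auto. ring.
Qed.

Lemma Dy_affine (g : qmap) (a b : quat) (x y : R) : has_partials g ->
  Dy (fun (s t : R) => qadd a (qmul (g s t) b)) x y = qmul (Dy g x y) b.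
Proof.
  intros Hg. destruct (Hg x y) as [_ [_ [_ [_ [H0 [H1 [H2 H3]]]]]]].
  unfold Dy, qadd, qmul; simpl. f_equal.
  - rewrite (Derive_ext _ (fun s => q0 a + (q0 (g x s) * q0 b + q1 (g x s) * (- q1 b) + q2 (g x s) * (- q2 b) + q3 (g x s) * (- q3 b)))) by (intros; ring).
    rewrite L4 by auto. ring.
  - rewrite (Derive_ext _ (fun s => q1 a + (q0 (g x s) * q1 b + q1 (g x s) * q0 b + q2 (g x s) * q3 b + q3 (g x s) * (- q2 b)))) by (intros; ring).
    rewrite L4 by auto. ring.
  - rewrite (Derive_ext _ (fun s => q2 a + (q0 (g x s) * q2 b + q1 (g x s) * (- q3 b) + q2 (g x s) * q0 b + q3 (g x s) * q1 b))) by (intros; ring).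
    rewrite L4 by auto. ring.
  - rewrite (Derive_ext _ (fun s => q3 a + (q0 (g x s) * q3 b + q1 (g x s) * q2 b + q2 (g x s) * (- q1 b) + q3 (g x s) * q0 b))) by (intros; ring).
    rewrite L4 by auto. ring.
Qed.

Ltac qdestr := repeat match goal with q : quat |- _ => destruct q end.

Lemma quat_eq (p q : quat) : q0 p = q0 q -> q1 p = q1 q -> q2 p = q2 q -> q3 p = q3 q -> p = q.
Proof. destruct p, q; simpl; intros; subst; reflexivity. Qed.

Lemma qmul_nozero (p q : quat) : p <> qzero -> qmul p q = qzero -> q = qzero.
Proof.
  intros Hp H. destruct p as [p0 p1 p2 p3], q as [r0 r1 r2 r3].
  unfold qmul, qzero in H; simpl in H. injection H; intros E3 E2 E1 E0.
  assert (Hn : p0*p0 + p1*p1 + p2*p2 + p3*p3 <> 0).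
  { intro Hz. apply Hp. assert (p0 = 0) by nra. assert (p1 = 0) by nra.
    assert (p2 = 0) by nra. assert (p3 = 0) by nra. subst. reflexivity. }
  match type of E0 with ?a = _ => set (w0 := a) in E0 end.
  match type of E1 with ?a = _ => set (w1 := a) in E1 end.
  match type of E2 with ?a = _ => set (w2 := a) in E2 end.
  match type of E3 with ?a = _ => set (w3 := a) in E3 end.
  assert (H0 : (p0*p0 + p1*p1 + p2*p2 + p3*p3) * r0 = p0*w0 + p1*w1 + p2*w2 + p3*w3) by (unfold w0,w1,w2,w3; ring).
  assert (H1 : (p0*p0 + p1*p1 + p2*p2 + p3*p3) * r1 = p0*w1 - p1*w0 - p2*w3 + p3*w2) by (unfold w0,w1,w2,w3; ring).
  assert (H2 : (p0*p0 + p1*p1 + p2*p2 + p3*p3) * r2 = p0*w2 + p1*w3 - p2*w0 - p3*w1) by (unfold w0,w1,w2,w3; ring).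
  assert (H3 : (p0*p0 + p1*p1 + p2*p2 + p3*p3) * r3 = p0*w3 - p1*w2 + p2*w1 - p3*w0) by (unfold w0,w1,w2,w3; ring).
  rewrite E0, E1, E2, E3, ?Rmult_0_r, ?Rplus_0_r, ?Rminus_0_r in *.
  unfold qzero; f_equal; [destruct (Rmult_integral _ _ H0)|destruct (Rmult_integral _ _ H1)|destruct (Rmult_integral _ _ H2)|destruct (Rmult_integral _ _ H3)]; tauto.
Qed.


Lemma Dxf_nz (f N : qmap) x y : conformal_immersion f N -> Dx f x y <> qzero.
Proof.
  intros [_ [Hinj _]] Hz. destruct (Hinj x y 1 0) as [H _]; [|lra].
  rewrite Hz. destruct (Dy f x y). unfold qadd, qmul, qreal, qzero; simpl. f_equal; ring.
Qed.

Lemma has_partials_of (f N : qmap) : conformal_immersion f N -> has_partials f.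
Proof.
  intros [[P [HP HPc]] _] . apply HPc; auto.
Qed.

Lemma part1 (f N alpha T : qmap) : conformal_immersion f N ->
  in_span_1_f f alpha -> (forall x y, alpha x y <> qzero) ->
  darboux_T f alpha T -> darboux_constant f alpha T.
Proof.
  intros Hf [a [b Hab]] Hnz HT.
  assert (Ea : alpha = fun s t => qadd a (qmul (f s t) b)).
  { extensionality s; extensionality t; apply Hab. }
  assert (Hnu : forall x y, qmul (T x y) (alpha x y) = qopp b).
  { intros x y. destruct (HT x y) as [Hx _].
    rewrite Ea in Hx at 1. rewrite Dx_affine in Hx by (eapply has_partials_of; eauto).
    assert (Z : qmul (Dx f x y) (qadd b (qmul (T x y) (alpha x y))) = qzero).
    { revert Hx. generalize (Dx f x y) (qmul (T x y) (alpha x y)); intros p q Hx.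
      transitivity (qadd (qmul p b) (qopp (qopp (qmul p q)))).
      - qdestr; unfold qadd, qmul, qopp; simpl; f_equal; ring.
      - rewrite Hx. qdestr; unfold qadd, qmul, qopp, qzero; simpl; f_equal; ring. }
    apply qmul_nozero in Z; [|eapply Dxf_nz; eauto].
    revert Z. generalize (qmul (T x y) (alpha x y)); intros q Z.
    qdestr; unfold qadd, qopp, qzero in *; simpl in *. injection Z; intros.
    f_equal; lra. }
  exists a, (qopp b). split.
  - destruct (classic (a = qzero)) as [Ha|Ha]; [|left; auto].
    right. intro Hb. apply (Hnz 0 0). rewrite Hab, Ha.
    assert (b = qzero).
    { destruct b; unfold qopp, qzero in *; injection Hb; intros; f_equal; lra. }
    subst. destruct (f 0 0). unfold qadd, qmul, qzero; simpl; f_equal; ring.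
  - intros x y. simpl. rewrite Hnu. exists qone. split.
    + intro H; unfold qone, qzero in H; injection H; lra.
    + rewrite Hab. split; qdestr; unfold qadd, qmul, qopp, qone; simpl; f_equal; ring.
Qed.

Module LA.
From HB Require Import structures.
From mathcomp Require Import all_boot all_algebra Rstruct.
Set Implicit Arguments. Unset Strict Implicit. Unset Printing Implicit Defensive.
Import GRing.Theory.

Definition sum8 (g : nat -> R) : R :=
  Rplus (Rplus (Rplus (Rplus (Rplus (Rplus (Rplus (g 0%N) (g 1%N)) (g 2%N)) (g 3%N)) (g 4%N)) (g 5%N)) (g 6%N)) (g 7%N).

Lemma sum8E (g : nat -> R) : sum8 g = (\sum_(i < 8) g (val i))%R.
Proof.
rewrite !big_ord_recr big_ord0 /= /sum8. by rewrite GRing.add0r.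
Qed.
Local Close Scope ring_scope.
Local Open Scope ring_scope.
Lemma span_transfer (F : fieldType) (X : Type) (n : nat) (w v : 'I_n -> X -> F) :
  (forall i, exists r : 'I_n -> F, forall t, v i t = \sum_j r j * w j t) ->
  (forall u : 'I_n -> F, (forall t, \sum_i u i * v i t = 0) -> forall i, u i = 0) ->
  forall c : 'I_n -> F, exists d : 'I_n -> F,
    forall t, \sum_j c j * w j t = \sum_i d i * v i t.
Proof.
move=> Hr Hind c.
have [r Er] := fin_all_exists Hr.
pose M := \matrix_(i < n, j < n) r i j.
have key : forall (u : 'rV[F]_n) t, \sum_i u 0 i * v i t = \sum_j (u *m M) 0 j * w j t.
  move=> u t.
  under eq_bigr => i _ do rewrite Er big_distrr /=.
  rewrite exchange_big /=; apply: eq_bigr => j _.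
  rewrite !mxE big_distrl /=; apply: eq_bigr => i _.
  by rewrite !mxE mulrA.
have Mu : M \in unitmx.
  rewrite -row_free_unit; apply: inj_row_free => u Hu.
  apply/rowP => i; rewrite mxE.
  apply: (Hind (fun i => u 0 i)) => t.
  by rewrite key Hu; apply: big1 => j _; rewrite mxE mul0r.
pose cr : 'rV[F]_n := \row_j c j.
exists (fun i => (cr *m invmx M) 0 i) => t.
rewrite key mulmxKV //.
by apply: eq_bigr => j _; rewrite mxE.
Qed.
Local Close Scope ring_scope.

Lemma span8 (X : Type) (w v : nat -> X -> R) :
  (forall i, lt i 8 -> exists r : nat -> R, forall t, v i t = sum8 (fun j => Rmult (r j) (w j t))) ->
  (forall u : nat -> R, (forall t, sum8 (fun i => Rmult (u i) (v i t)) = 0%R) -> forall i, lt i 8 -> u i = 0%R) ->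
  forall c : nat -> R, exists d : nat -> R,
    forall t, sum8 (fun j => Rmult (c j) (w j t)) = sum8 (fun i => Rmult (d i) (v i t)).
Proof.
move=> Hr Hind c.
have H1 : forall i : 'I_8, exists r : 'I_8 -> R, forall t, v (val i) t = (\sum_j r j * w (val j) t)%R.
  move=> i; have [r Er] := Hr (val i) (elimT ltP (ltn_ord i)).
  exists (fun j => r (val j)) => t; by rewrite Er sum8E.
have H2 : forall u : 'I_8 -> R, (forall t, (\sum_i u i * v (val i) t)%R = 0%R) -> forall i, u i = 0%R.
  move=> u Hu i.
  pose u' n := if (n < 8)%N then u (inord n) else 0%R.
  have := Hind u' _ (val i) (elimT ltP (ltn_ord i)).
  rewrite /u' ltn_ord inord_val; apply => t.
  rewrite sum8E -[RHS](Hu t); apply: eq_bigr => j _; by rewrite /u' ltn_ord inord_val.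
have [d Hd] := @span_transfer _ X 8 (fun i => w (val i)) (fun i => v (val i)) H1 H2 (fun i => c (val i)).
exists (fun n => d (inord n)) => t.
rewrite !sum8E (Hd t); apply: eq_bigr => j _; by rewrite inord_val.
Qed.

End LA.

Definition comp (q : quat) (k : nat) : R :=
  match k with 0%nat => q0 q | 1%nat => q1 q | 2%nat => q2 q | _ => q3 q end.
Definition Fh (g : qmap) (t : R * R * nat) : R := comp (g (fst (fst t)) (snd (fst t))) (snd t).
Definition qi := Q 0 1 0 0.
Definition qj := Q 0 0 1 0.
Definition qk := Q 0 0 0 1.
Definition aff (f : qmap) (a b : quat) : qmap := fun x y => qadd a (qmul (f x y) b).
Definition Wf (e1 e2 e3 e4 : qmap) (j : nat) : qmap :=
  match j with
  | 0%nat => fun x y => qmul (e1 x y) qone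
  | 1%nat => fun x y => qmul (e1 x y) qi
  | 2%nat => fun x y => qmul (e2 x y) qone
  | 3%nat => fun x y => qmul (e2 x y) qi
  | 4%nat => fun x y => qmul (e3 x y) qone
  | 5%nat => fun x y => qmul (e3 x y) qi
  | 6%nat => fun x y => qmul (e4 x y) qone
  | _ => fun x y => qmul (e4 x y) qi
  end.
Definition Vf (f : qmap) (i : nat) : qmap :=
  match i with
  | 0%nat => aff f qone qzero
  | 1%nat => aff f qi qzero
  | 2%nat => aff f qj qzero
  | 3%nat => aff f qk qzero
  | 4%nat => aff f qzero qone
  | 5%nat => aff f qzero qi
  | 6%nat => aff f qzero qj
  | _ => aff f qzero qk
  end.
Definition r8 (a1 b1 a2 b2 a3 b3 a4 b4 : R) (j : nat) : R :=
  match j with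
  | 0%nat => a1 | 1%nat => b1 | 2%nat => a2 | 3%nat => b2
  | 4%nat => a3 | 5%nat => b3 | 6%nat => a4 | _ => b4 end.

Lemma LC e1 e2 e3 e4 a1 b1 a2 b2 a3 b3 a4 b4 x y k :
  comp (lincomb4 e1 e2 e3 e4 (qcplx a1 b1) (qcplx a2 b2) (qcplx a3 b3) (qcplx a4 b4) x y) k
  = LA.sum8 (fun j => r8 a1 b1 a2 b2 a3 b3 a4 b4 j * Fh (Wf e1 e2 e3 e4 j) (x, y, k)).
Proof.
  unfold LA.sum8, Fh, lincomb4, Wf, r8; simpl.
  destruct (e1 x y), (e2 x y), (e3 x y), (e4 x y).
  destruct k as [|[|[|[|k]]]]; unfold qadd, qmul, qcplx, qone, qi; simpl; ring.
Qed.

Lemma VS f (u : nat -> R) x y k :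
  LA.sum8 (fun i => u i * Fh (Vf f i) (x, y, k))
  = comp (aff f (Q (u 0%nat) (u 1%nat) (u 2%nat) (u 3%nat)) (Q (u 4%nat) (u 5%nat) (u 6%nat) (u 7%nat)) x y) k.
Proof.
  unfold LA.sum8, Fh, Vf, aff; simpl.
  destruct (f x y).
  destruct k as [|[|[|[|k]]]]; unfold qadd, qmul, qone, qi, qj, qk, qzero; simpl; ring.
Qed.

Lemma qmul_assoc (a b c : quat) : qmul (qmul a b) c = qmul a (qmul b c).
Proof. qdestr; unfold qmul; simpl; f_equal; ring. Qed.

Lemma C4 (U : UniformSpace) (u0 u1 u2 u3 : U -> R) c k0 k1 k2 k3 x :
  continuous u0 x -> continuous u1 x -> continuous u2 x -> continuous u3 x ->
  continuous (fun p => c + (u0 p * k0 + u1 p * k1 + u2 p * k2 + u3 p * k3)) x.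
Proof.
  intros H0 H1 H2 H3.
  apply (continuous_plus (V := R_NormedModule) (fun _ => c)); [apply continuous_const|].
  repeat apply (continuous_plus (V := R_NormedModule));
  apply (continuous_mult (K := R_AbsRing)); auto; apply continuous_const.
Qed.

Lemma L4ex (u0 u1 u2 u3 : R -> R) c k0 k1 k2 k3 x :
  ex_derive u0 x -> ex_derive u1 x -> ex_derive u2 x -> ex_derive u3 x ->
  ex_derive (fun s => c + (u0 s * k0 + u1 s * k1 + u2 s * k2 + u3 s * k3)) x.
Proof. intros. auto_derive. repeat split; auto. Qed.

Lemma c0 a b p : q0 (qadd a (qmul p b)) = q0 a + (q0 p * q0 b + q1 p * (- q1 b) + q2 p * (- q2 b) + q3 p * (- q3 b)).
Proof. unfold qadd, qmul; simpl; ring. Qed.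
Lemma c1 a b p : q1 (qadd a (qmul p b)) = q1 a + (q0 p * q1 b + q1 p * q0 b + q2 p * q3 b + q3 p * (- q2 b)).
Proof. unfold qadd, qmul; simpl; ring. Qed.
Lemma c2 a b p : q2 (qadd a (qmul p b)) = q2 a + (q0 p * q2 b + q1 p * (- q3 b) + q2 p * q0 b + q3 p * q1 b).
Proof. unfold qadd, qmul; simpl; ring. Qed.
Lemma c3 a b p : q3 (qadd a (qmul p b)) = q3 a + (q0 p * q3 b + q1 p * q2 b + q2 p * (- q1 b) + q3 p * q0 b).
Proof. unfold qadd, qmul; simpl; ring. Qed.

Lemma aff_qcont g a b : qcont g -> qcont (aff g a b).
Proof.
  intros Hg x y. destruct (Hg x y) as [H0 [H1 [H2 H3]]]. unfold aff.
  repeat split.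
  - eapply continuous_ext; [intro p; symmetry; apply c0|]. apply C4; auto.
  - eapply continuous_ext; [intro p; symmetry; apply c1|]. apply C4; auto.
  - eapply continuous_ext; [intro p; symmetry; apply c2|]. apply C4; auto.
  - eapply continuous_ext; [intro p; symmetry; apply c3|]. apply C4; auto.
Qed.

Lemma aff_partials g a b : has_partials g -> has_partials (aff g a b).
Proof.
  intros Hg x y. destruct (Hg x y) as [H0 [H1 [H2 [H3 [H4 [H5 [H6 H7]]]]]]]. unfold aff.
  repeat split.
  all: first
    [ eapply ex_derive_ext; [intro p; symmetry; apply c0|]; apply L4ex; auto
    | eapply ex_derive_ext; [intro p; symmetry; apply c1|]; apply L4ex; auto
    | eapply ex_derive_ext; [intro p; symmetry; apply c2|]; apply L4ex; auto
    | eapply ex_derive_ext; [intro p; symmetry; apply c3|]; apply L4ex; auto ].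
Qed.

Lemma aff_Dx g a b : has_partials g -> Dx (aff g a b) = aff (Dx g) qzero b.
Proof.
  intros Hg. extensionality x; extensionality y. unfold aff at 1.
  rewrite Dx_affine by auto. unfold aff. destruct (Dx g x y), b.
  unfold qadd, qmul, qzero; simpl; f_equal; ring.
Qed.

Lemma aff_Dy g a b : has_partials g -> Dy (aff g a b) = aff (Dy g) qzero b.
Proof.
  intros Hg. extensionality x; extensionality y. unfold aff at 1.
  rewrite Dy_affine by auto. unfold aff. destruct (Dy g x y), b.
  unfold qadd, qmul, qzero; simpl; f_equal; ring.
Qed.

Lemma aff_H0 w1x w1y w2x w2y f N a b :
  periodic w1x w1y w2x w2y f -> conformal_immersion f N ->
  inH0 w1x w1y w2x w2y N (aff f a b).
Proof.
  intros Hper Hf. pose proof (has_partials_of f N Hf) as Hfp.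
  destruct Hf as [[P [HP HPc]] [_ Hstar]].
  split; [split|].
  - exists (fun h => exists g a b, P g /\ h = aff g a b). split.
    + exists f, a, b; auto.
    + intros h [g [a' [b' [Pg ->]]]]. destruct (HPc g Pg) as [Hc [Hp [PDx PDy]]].
      split; [apply aff_qcont; auto|]. split; [apply aff_partials; auto|].
      split.
      * rewrite aff_Dx by auto. exists (Dx g), qzero, b'; auto.
      * rewrite aff_Dy by auto. exists (Dy g), qzero, b'; auto.
  - intros x y. rewrite aff_Dx, aff_Dy by auto. unfold aff.
    destruct (Hstar x y) as [E1 E2]. split.
    + rewrite E1. generalize (N x y) (Dx f x y); intros n d.
      qdestr; unfold qadd, qmul, qzero; simpl; f_equal; ring.
    + transitivity (qadd qzero (qmul (qopp (Dx f x y)) b)).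
      * generalize (Dx f x y); intros d. qdestr; unfold qadd, qmul, qopp, qzero; simpl; f_equal; ring.
      * rewrite E2. generalize (N x y) (Dy f x y); intros n d.
        qdestr; unfold qadd, qmul, qzero; simpl; f_equal; ring.
  - intros x y. unfold aff. destruct (Hper x y) as [E1 E2]. rewrite E1, E2. auto.
Qed.

Lemma Dx_zero (g : qmap) : (forall x y, g x y = qzero) -> forall x y, Dx g x y = qzero.
Proof.
  intros Hz. assert (E : g = fun _ _ => qzero) by (extensionality s; extensionality t; auto).
  subst g. intros x y. unfold Dx, qzero; simpl. rewrite !Derive_const. reflexivity.
Qed.

Lemma aff_zero f N a b : conformal_immersion f N ->
  (forall x y, aff f a b x y = qzero) -> a = qzero /\ b = qzero.
Proof.
  intros Hf Hz.
  assert (Hb : b = qzero).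
  { apply (qmul_nozero (Dx f 0 0)); [eapply Dxf_nz; eauto|].
    rewrite <- (Dx_affine f a b) by (eapply has_partials_of; eauto).
    apply (Dx_zero (aff f a b)); auto. }
  split; auto. specialize (Hz 0 0). unfold aff in Hz. subst b.
  rewrite <- Hz. destruct (f 0 0), a. unfold qadd, qmul, qzero; simpl; f_equal; ring.
Qed.

Lemma Vf_H0 w1x w1y w2x w2y f N i :
  periodic w1x w1y w2x w2y f -> conformal_immersion f N ->
  inH0 w1x w1y w2x w2y N (Vf f i).
Proof.
  intros. destruct i as [|[|[|[|[|[|[|i]]]]]]]; simpl; apply aff_H0; auto.
Qed.

Lemma part2 w1x w1y w2x w2y f N :
  periodic w1x w1y w2x w2y f -> conformal_immersion f N ->
  dimC_H0_eq4 w1x w1y w2x w2y N ->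
  forall alpha, inH0 w1x w1y w2x w2y N alpha -> in_span_1_f f alpha.
Proof.
  intros Hper Hf Hdim alpha HA.
  destruct Hdim as (e1 & e2 & e3 & e4 & He1 & He2 & He3 & He4 & Hind & Hsp).
  destruct (Hsp alpha HA) as (a1 & b1 & a2 & b2 & a3 & b3 & a4 & b4 & Ea).
  assert (Hr : forall i, lt i 8 -> exists r : nat -> R, forall t,
            Fh (Vf f i) t = LA.sum8 (fun j => r j * Fh (Wf e1 e2 e3 e4 j) t)).
  { intros i _. destruct (Hsp (Vf f i)) as (c1 & d1 & c2 & d2 & c3 & d3 & c4 & d4 & Ec).
    { apply Vf_H0; auto. }
    exists (r8 c1 d1 c2 d2 c3 d3 c4 d4). intros [[x y] k].
    change (comp (Vf f i x y) k = LA.sum8 (fun j => r8 c1 d1 c2 d2 c3 d3 c4 d4 j * Fh (Wf e1 e2 e3 e4 j) (x, y, k))).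
    rewrite Ec. apply LC. }
  assert (Hi : forall u : nat -> R, (forall t, LA.sum8 (fun i => u i * Fh (Vf f i) t) = 0) ->
            forall i, lt i 8 -> u i = 0).
  { intros u Hu.
    destruct (aff_zero f N (Q (u 0%nat) (u 1%nat) (u 2%nat) (u 3%nat)) (Q (u 4%nat) (u 5%nat) (u 6%nat) (u 7%nat)) Hf) as [Ha Hb].
    { intros x y. apply quat_eq.
      - change (comp (aff f (Q (u 0%nat) (u 1%nat) (u 2%nat) (u 3%nat)) (Q (u 4%nat) (u 5%nat) (u 6%nat) (u 7%nat)) x y) 0 = 0).
        rewrite <- VS. apply Hu.
      - change (comp (aff f (Q (u 0%nat) (u 1%nat) (u 2%nat) (u 3%nat)) (Q (u 4%nat) (u 5%nat) (u 6%nat) (u 7%nat)) x y) 1 = 0).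
        rewrite <- VS. apply Hu.
      - change (comp (aff f (Q (u 0%nat) (u 1%nat) (u 2%nat) (u 3%nat)) (Q (u 4%nat) (u 5%nat) (u 6%nat) (u 7%nat)) x y) 2 = 0).
        rewrite <- VS. apply Hu.
      - change (comp (aff f (Q (u 0%nat) (u 1%nat) (u 2%nat) (u 3%nat)) (Q (u 4%nat) (u 5%nat) (u 6%nat) (u 7%nat)) x y) 3 = 0).
        rewrite <- VS. apply Hu. }
    unfold qzero in Ha, Hb. injection Ha; injection Hb; intros.
    destruct i as [|[|[|[|[|[|[|[|i]]]]]]]]; auto; lia. }
  destruct (LA.span8 Hr Hi (r8 a1 b1 a2 b2 a3 b3 a4 b4)) as [d Hd].
  exists (Q (d 0%nat) (d 1%nat) (d 2%nat) (d 3%nat)), (Q (d 4%nat) (d 5%nat) (d 6%nat) (d 7%nat)).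
  intros x y. rewrite Ea. apply quat_eq.
  - change (comp (lincomb4 e1 e2 e3 e4 (qcplx a1 b1) (qcplx a2 b2) (qcplx a3 b3) (qcplx a4 b4) x y) 0 = comp (aff f (Q (d 0%nat) (d 1%nat) (d 2%nat) (d 3%nat)) (Q (d 4%nat) (d 5%nat) (d 6%nat) (d 7%nat)) x y) 0).
    rewrite LC, Hd, VS. reflexivity.
  - change (comp (lincomb4 e1 e2 e3 e4 (qcplx a1 b1) (qcplx a2 b2) (qcplx a3 b3) (qcplx a4 b4) x y) 1 = comp (aff f (Q (d 0%nat) (d 1%nat) (d 2%nat) (d 3%nat)) (Q (d 4%nat) (d 5%nat) (d 6%nat) (d 7%nat)) x y) 1).
    rewrite LC, Hd, VS. reflexivity.
  - change (comp (lincomb4 e1 e2 e3 e4 (qcplx a1 b1) (qcplx a2 b2) (qcplx a3 b3) (qcplx a4 b4) x y) 2 = comp (aff f (Q (d 0%nat) (d 1%nat) (d 2%nat) (d 3%nat)) (Q (d 4%nat) (d 5%nat) (d 6%nat) (d 7%nat)) x y) 2).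
    rewrite LC, Hd, VS. reflexivity.
  - change (comp (lincomb4 e1 e2 e3 e4 (qcplx a1 b1) (qcplx a2 b2) (qcplx a3 b3) (qcplx a4 b4) x y) 3 = comp (aff f (Q (d 0%nat) (d 1%nat) (d 2%nat) (d 3%nat)) (Q (d 4%nat) (d 5%nat) (d 6%nat) (d 7%nat)) x y) 3).
    rewrite LC, Hd, VS. reflexivity.
Qed.

Theorem corollary3p5 (w1x w1y w2x w2y : R) (f N : qmap) :
  lattice_nondeg w1x w1y w2x w2y ->
  periodic w1x w1y w2x w2y f ->
  conformal_immersion f N ->
  (forall alpha T : qmap,
      inH0 w1x w1y w2x w2y N alpha ->
      in_span_1_f f alpha ->
      (forall x y, alpha x y <> qzero) ->
      darboux_T f alpha T ->
      darboux_constant f alpha T) /\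
  (dimC_H0_eq4 w1x w1y w2x w2y N ->
   forall alpha T : qmap,
      inH0 w1x w1y w2x w2y N alpha ->
      (forall x y, alpha x y <> qzero) ->
      darboux_T f alpha T ->
      darboux_constant f alpha T).
Proof.
  intros _ Hper Hf. split.
  - intros alpha T _ Hs Hnz HT. eapply part1; eauto.
  - intros Hdim alpha T HA Hnz HT. eapply part1; eauto. eapply part2; eauto.
Qed.
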